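(* If $n\ge 1$ and $k\ge 2$ are integers, then the $k$-Pell graph $\Pi_{n,k}$ is a subgraph of the Fibonacci cube $\Gamma_{(2k-2)n-1}$, i.e. there is an injective map $V(\Pi_{n,k})\to V(\Gamma_{(2k-2)n-1})$ sending adjacent vertices to adjacent vertices.
   Context: For an integer $k\ge 2$, a $k$-Pell string is a finite word over the alphabet $\{0,1,\ldots,k-1,kk\}$, i.e. a word over $\{0,1,\ldots,k\}$ in which every maximal run of the letter $k$ has even length. For $n\ge 0$, the $k$-Pell graph $\Pi_{n,k}$ has as vertices all $k$-Pell strings of length $n$, and two vertices are adjacent if one is obtained from the other either by replacing a single letter $i$ by $i+1$ (or vice versa) for some $i\in\{0,1,\ldots,k-2\}$, or by replacing one factor $(k-1)(k-1)$ by $kk$ (or vice versa), in such a way that the resulting string is again a $k$-Pell string. The Fibonacci cube $\Gamma_m$ is the graph whose vertices are the binary strings of length $m$ with no two consecutive 1s, two vertices being adjacent iff they differ in exactly one coordinate. *)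

(* Defs.v *)
From mathcomp Require Import all_boot.
Set Implicit Arguments. Unset Strict Implicit. Unset Printing Implicit Defensive.

(* k-Pell strings: words over {0,...,k-1} U {kk}, i.e. words over {0..k}
   whose maximal runs of the letter k all have even length. *)
Fixpoint pell_word (k : nat) (s : seq nat) : bool :=
  match s with
  | [::] => true
  | a :: t =>
      if a == k then
        (match t with
         | b :: t' => (b == k) && pell_word k t'
         | [::] => false
         end)
      else (a < k) && pell_word k t
  end.

Definition pell_vertex (n k : nat) (s : seq nat) : bool :=
  (size s == n) && pell_word k s.

Definition pell_up (k : nat) (u v : seq nat) : Prop :=
  (size u = size v) /\
  ((exists j, j < size u /\ nth 0 u j <= k - 2 /\ nth 0 v j = (nth 0 u j).+1 /\
       forall i, i != j -> nth 0 u i = nth 0 v i)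
   \/
   (exists j, j.+1 < size u /\ nth 0 u j = k - 1 /\ nth 0 u j.+1 = k - 1 /\
       nth 0 v j = k /\ nth 0 v j.+1 = k /\
       forall i, i != j -> i != j.+1 -> nth 0 u i = nth 0 v i)).

Definition pell_adj (n k : nat) (u v : seq nat) : Prop :=
  pell_vertex n k u /\ pell_vertex n k v /\ (pell_up k u v \/ pell_up k v u).

Definition fib_vertex (m : nat) (s : seq bool) : bool :=
  (size s == m) && [forall i : 'I_m, ~~ (nth false s i && nth false s i.+1)].

Definition fib_adj (m : nat) (x y : seq bool) : Prop :=
  fib_vertex m x /\ fib_vertex m y /\
  #|[pred i : 'I_m | nth false x i != nth false y i]| = 1.

(* Main.v *)
Require Import Defs.
From mathcomp Require Import all_boot.
From mathcomp Require Import zify.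
Set Implicit Arguments. Unset Strict Implicit.

Definition dblk (k a : nat) : seq bool :=
  mkseq (fun p => ~~ odd p && (p < 2 * (k - 1 - a))) (2 * k - 2).
Definition kkblk (k : nat) : seq bool := mkseq (fun p => p == 1) (2 * (2 * k - 2)).

Fixpoint enc (k : nat) (s : seq nat) : seq bool :=
  match s with
  | [::] => [::]
  | a :: t => if a == k then
                (match t with _ :: t' => kkblk k ++ enc k t' | [::] => [::] end)
              else dblk k a ++ enc k t
  end.

Lemma seq_ind2 (T : Type) (P : seq T -> Prop) : P [::] -> (forall x, P [:: x]) ->
  (forall x y t, P t -> P (y :: t) -> P (x :: y :: t)) -> forall s, P s.
Proof.
move=> H0 H1 H2 s. suff: P s /\ forall x, P (x :: s) by case.
elim: s => [|y t [IH1 IH2]]; split => //. by move=> x; apply: H2.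
Qed.

Lemma pell_prefix k p a q : a != k -> pell_word k (p ++ a :: q) -> pell_word k p.
Proof.
move=> ak; move: p; apply: seq_ind2 => //=.
- move=> x; case: ifP => _; [by rewrite (negbTE ak) | by case/andP=> ->].
- move=> x y t IH1 IH2 /=; case: ifP => _ /andP [-> H]; [by rewrite IH1 | by rewrite IH2].
Qed.

Lemma pell_cons k a t : pell_word k (a :: t) ->
  (a < k /\ pell_word k t /\ enc k (a :: t) = dblk k a ++ enc k t) \/
  (a = k /\ exists t', t = k :: t' /\ pell_word k t' /\ enc k (a :: t) = kkblk k ++ enc k t').
Proof.
rewrite /=; case: eqP => [->|ne].
- case: t => [|b t'] //= /andP [/eqP -> H]. right; split => //. by exists t'.
- case/andP => H1 H2; left; split => //.
Qed.

Lemma enc_cat k p s : pell_word k p -> enc k (p ++ s) = enc k p ++ enc k s.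
Proof.
move: p; apply: seq_ind2 => //=.
- move=> x; case: eqP => // _ _; by rewrite cats0.
- move=> x y t IH1 IH2 /=; case: (x == k) => /andP [H1 H2].
  + by rewrite IH1 // catA.
  + have := IH2 H2. rewrite /= => ->. by rewrite catA.
Qed.

Lemma enc_size k s : pell_word k s -> size (enc k s) = (2 * k - 2) * size s.
Proof.
move: s; apply: seq_ind2 => //=.
- by rewrite muln0.
- move=> x; case: eqP => // _ _; by rewrite cats0 size_mkseq muln1.
- move=> x y t IH1 IH2 /=; case: (x == k) => /andP [H1 H2].
  + rewrite size_cat size_mkseq IH1 //. lia.
  + have := IH2 H2 => E. rewrite size_cat E size_mkseq. lia.
Qed.

Fixpoint nocons (s : seq bool) : bool :=
  match s with
  | x :: t => (if t is y :: _ then ~~ (x && y) else true) && nocons t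
  | [::] => true
  end.

Lemma noconsP s : nocons s -> forall i, ~~ (nth false s i && nth false s i.+1).
Proof.
elim: s => [|x t IH] /=; first by move=> _ i; rewrite !nth_nil.
case/andP=> H1 H2 [|i] /=; last exact: IH.
by case: t H1 {IH H2} => [|y t'] //=; rewrite andbF.
Qed.

Lemma noconsI s : (forall i, ~~ (nth false s i && nth false s i.+1)) -> nocons s.
Proof.
elim: s => [|x t IH] //= H; apply/andP; split.
- case: t {IH} H => [|y t'] // H. exact: (H 0).
- apply: IH => i. exact: (H i.+1).
Qed.

Lemma nocons_cat x y : nocons x -> nocons y -> last false x = false -> nocons (x ++ y).
Proof.
elim: x => [|x0 x' IH] //= /andP [H1 H2] Hy.
case: x' IH H1 H2 => [|z x''] IH H1 H2 /=.
- move=> ->. rewrite Hy andbT. by case: y {Hy IH}.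
- move=> Hl. rewrite H1 /=. exact: (IH H2 Hy Hl).
Qed.

Lemma nth_mkseq_gen (f : nat -> bool) n i :
  nth false (mkseq f n) i = (i < n) && f i.
Proof.
case: (ltnP i n) => H; first by rewrite nth_mkseq.
by rewrite nth_default // size_mkseq.
Qed.

Lemma last_mkseq (f : nat -> bool) n : last false (mkseq f n) = (0 < n) && f n.-1.
Proof.
rewrite -nth_last size_mkseq nth_mkseq_gen. case: n => //= n. by rewrite ltnSn.
Qed.

Lemma dblk_ok k a : 2 <= k -> nocons (dblk k a) /\ last false (dblk k a) = false.
Proof.
move=> hk; split.
- apply: noconsI => i; rewrite /dblk !nth_mkseq_gen /=.
  by case: (odd i); rewrite ?andbF.
- rewrite /dblk last_mkseq.
  have -> : (2 * k - 2).-1 = (2 * (k - 2)).+1 by lia.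
  by rewrite /= oddM /= andbF.
Qed.

Lemma kkblk_ok k : 2 <= k -> nocons (kkblk k) /\ last false (kkblk k) = false.
Proof.
move=> hk; split.
- apply: noconsI => i; rewrite /kkblk !nth_mkseq_gen /=.
  by case: i => [|[|i]]; rewrite ?andbF.
- rewrite /kkblk last_mkseq.
  have -> : (2 * (2 * k - 2)).-1 == 1 = false by apply/eqP; lia.
  by rewrite andbF.
Qed.

Lemma enc_ok k s : 2 <= k -> pell_word k s -> nocons (enc k s) /\ last false (enc k s) = false.
Proof.
move=> hk; move: s; apply: seq_ind2 => //=.
- move=> x; case: eqP => // _ _; rewrite cats0; exact: dblk_ok.
- have cat_ok : forall b y, nocons b /\ last false b = false ->
      nocons y /\ last false y = false ->
      nocons (b ++ y) /\ last false (b ++ y) = false.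
    move=> b y [B1 B2] [Y1 Y2]; split; first exact: nocons_cat.
    by rewrite last_cat B2.
  move=> x y t IH1 IH2 /=; case: ifP => _ /andP [H1 H2].
  + apply: cat_ok; [exact: kkblk_ok | exact: IH1].
  + have := IH2 H2; rewrite /= => IH. apply: cat_ok => //; exact: dblk_ok.
Qed.

Definition hd (x y : seq bool) := count id [seq p.1 != p.2 | p <- zip x y].

Lemma hd_cat x1 x2 y1 y2 : size x1 = size y1 -> hd (x1 ++ x2) (y1 ++ y2) = hd x1 y1 + hd x2 y2.
Proof. by move=> H; rewrite /hd zip_cat // map_cat count_cat. Qed.

Lemma hd_refl x : hd x x = 0.
Proof. by elim: x => //= a x; rewrite /hd /= eqxx. Qed.

Lemma hd_nth x y : size x = size y ->
  hd x y = count (fun i => nth false x i != nth false y i) (iota 0 (size x)).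
Proof.
elim: x y => [|a x IH] [|b y] //= [] H.
rewrite /hd /= -/(hd x y) IH // -[1]addn0 iotaDl count_map.
by congr (_ + _).
Qed.

Lemma count_eq1 (P : pred nat) c m : c < m -> (forall i, i < m -> P i = (i == c)) ->
  count P (iota 0 m) = 1.
Proof.
move=> cm H. rewrite (@eq_in_count _ _ (pred1 c)); last first.
  by move=> i; rewrite mem_iota add0n => /andP [_ /H].
by rewrite count_uniq_mem ?iota_uniq // mem_iota add0n cm.
Qed.

Lemma hd_dblk k a : 2 <= k -> a <= k - 2 -> hd (dblk k a) (dblk k a.+1) = 1.
Proof.
move=> hk ha; rewrite hd_nth ?size_mkseq //.
apply: (@count_eq1 _ (2 * (k - 2 - a))); first lia.
move=> i Hi; rewrite /dblk !nth_mkseq_gen Hi /=.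
case: (boolP (odd i)) => Ho /=.
  apply/esym/eqP => E; move: Ho; rewrite E oddM //.
have E := odd_double_half i; rewrite (negbTE Ho) add0n in E.
move: Ho; rewrite -E; set h := i./2 => _.
case: (ltngtP h (k - 2 - a)) => Hh.
- have -> : h.*2 < 2 * (k - 1 - a) = true by lia.
  have -> : h.*2 < 2 * (k - 1 - a.+1) = true by lia.
  have -> : h.*2 == 2 * (k - 2 - a) = false by apply/eqP; lia.
  by [].
- have -> : h.*2 < 2 * (k - 1 - a) = false by lia.
  have -> : h.*2 < 2 * (k - 1 - a.+1) = false by lia.
  have -> : h.*2 == 2 * (k - 2 - a) = false by apply/eqP; lia.
  by [].
- have -> : h.*2 < 2 * (k - 1 - a) = true by lia.
  have -> : h.*2 < 2 * (k - 1 - a.+1) = false by lia.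
  have -> : h.*2 == 2 * (k - 2 - a) = true by apply/eqP; lia.
  by [].
Qed.

Lemma dblk_last k : dblk k (k - 1) = nseq (2 * k - 2) false.
Proof.
apply: (eq_from_nth (x0 := false)); rewrite size_mkseq ?size_nseq // => i Hi.
by rewrite nth_mkseq // nth_nseq Hi subnn muln0 ltn0 andbF.
Qed.

Lemma hd_kk k : 2 <= k -> hd (dblk k (k - 1) ++ dblk k (k - 1)) (kkblk k) = 1.
Proof.
move=> hk; rewrite dblk_last -nseqD hd_nth ?size_nseq ?size_mkseq; last lia.
apply: (@count_eq1 _ (1)); first lia.
move=> i Hi; rewrite nth_nseq /kkblk nth_mkseq_gen.
have -> : i < 2 * (2 * k - 2) = true by lia.
by rewrite if_same; case: (i == 1).
Qed.

Lemma dblk_inj k a b : a < k -> b < k -> dblk k a = dblk k b -> a = b.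
Proof.
have key : forall a b, a < b -> b < k -> dblk k a <> dblk k b.
  move=> x y xy yk E.
  have := congr1 (fun s => nth false s (2 * (k - 2 - x))) E.
  rewrite /dblk /= !nth_mkseq_gen oddM /=.
  have -> : 2 * (k - 2 - x) < 2 * k - 2 = true by lia.
  have -> : 2 * (k - 2 - x) < 2 * (k - 1 - x) = true by lia.
  have -> : 2 * (k - 2 - x) < 2 * (k - 1 - y) = false by lia.
  by [].
move=> ak bk E; case: (ltngtP a b) => // H.
- by case: (key _ _ H bk).
- by case: (key _ _ H ak).
Qed.

Lemma cat_same_size (x1 x2 y1 y2 : seq bool) : size x1 = size y1 -> x1 ++ x2 = y1 ++ y2 ->
  x1 = y1 /\ x2 = y2.
Proof. by move=> H /eqP; rewrite eqseq_cat // => /andP [/eqP -> /eqP ->]. Qed.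

Lemma enc_inj k : 2 <= k -> forall m u v, size u < m -> pell_word k u -> pell_word k v ->
  enc k u = enc k v -> u = v.
Proof.
move=> hk; elim=> [|m IH] u v //= Hm Pu Pv E.
have Su := enc_size Pu; have Sv := enc_size Pv.
case: u Hm Pu E Su => [|a t] Hm Pu E Su.
  case: v Pv E Sv => // b t' Pv E Sv; move: Sv; rewrite -E /=; nia.
case: v Pv E Sv => [|b t'] Pv E Sv.
  move: Su; rewrite E /=; nia.
have nth1 : forall b y, b < k -> nth false (dblk k b ++ y) 1 = false.
  move=> c y ck; rewrite nth_cat size_mkseq.
  have -> : 1 < 2 * k - 2 = true by lia.
  by rewrite nth_mkseq_gen andbF.
have nth1k : forall y, nth false (kkblk k ++ y) 1 = true.
  move=> y; rewrite nth_cat size_mkseq.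
  have -> : 1 < 2 * (2 * k - 2) = true by lia.
  rewrite nth_mkseq_gen /=; lia.
case: (pell_cons Pu) => [[ak [Pt Eu]] | [ak [t1 [Et [Pt1 Eu]]]]];
case: (pell_cons Pv) => [[bk [Pt' Ev]] | [bk [t2 [Et' [Pt2 Ev]]]]].
- move: E; rewrite Eu Ev => /cat_same_size []; first by rewrite !size_mkseq.
  move=> /dblk_inj -> // E; congr (_ :: _); apply: IH => //.
- move: E; rewrite Eu Ev => /(congr1 (fun s => nth false s 1)).
  by rewrite nth1 // nth1k.
- move: E; rewrite Eu Ev => /(congr1 (fun s => nth false s 1)).
  by rewrite nth1 // nth1k.
- move: E; rewrite Eu Ev => /cat_same_size [] // _ E.
  subst; congr (_ :: _ :: _); apply: IH => //. move: Hm => /=; lia.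
Qed.

Lemma split_eq (u v : seq nat) j w : size u = size v ->
  (forall i, i < j \/ j + w <= i -> nth 0 u i = nth 0 v i) ->
  take j u = take j v /\ drop (j + w) u = drop (j + w) v.
Proof.
move=> Hs H; split; apply: (eq_from_nth (x0 := 0)); rewrite ?size_take_min ?size_drop Hs // => i Hi.
- rewrite !nth_take; try lia. apply: H; lia.
- rewrite !nth_drop. apply: H; lia.
Qed.

Lemma adj_up n k u v : 2 <= k -> pell_vertex n k u -> pell_vertex n k v -> pell_up k u v ->
  hd (enc k u) (enc k v) = 1.
Proof.
move=> hk /andP [/eqP Su Pu] /andP [/eqP Sv Pv] [Hs [[j [Hj [Ha [Hb Ho]]]] | [j [Hj [H1 [H2 [H3 [H4 Ho]]]]]]]].
- have [Et Ed] := @split_eq u v j 1 Hs (fun i Hi => Ho i (ltac:(apply/eqP; lia))).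
  have Eu : u = take j u ++ nth 0 u j :: drop (j + 1) u.
    by rewrite addn1 -drop_nth // cat_take_drop.
  have Ev : v = take j u ++ (nth 0 u j).+1 :: drop (j + 1) u.
    by rewrite Et Ed -Hb addn1 -drop_nth ?cat_take_drop // -Hs.
  have Pp : pell_word k (take j u).
    apply: (@pell_prefix k _ (nth 0 u j) (drop (j + 1) u)); first by apply/eqP; lia.
    by rewrite -Eu.
  rewrite Eu Ev !enc_cat //= (_ : (nth 0 u j == k) = false); last by apply/eqP; lia.
  rewrite (_ : ((nth 0 u j).+1 == k) = false); last by apply/eqP; lia.
  rewrite hd_cat // hd_cat ?size_mkseq // hd_refl hd_refl hd_dblk //.
- have [Et Ed] := @split_eq u v j 2 Hs (fun i Hi => Ho i (ltac:(apply/eqP; lia)) (ltac:(apply/eqP; lia))).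
  have Eu : u = take j u ++ (k - 1) :: (k - 1) :: drop (j + 2) u.
    rewrite addn2 -{1}(cat_take_drop j u) (drop_nth 0 (_ : j < size u)); last lia.
    by rewrite (drop_nth 0 Hj) H1 H2.
  have Ev : v = take j u ++ k :: k :: drop (j + 2) u.
    rewrite Et Ed addn2 -{1}(cat_take_drop j v) (drop_nth 0 (_ : j < size v)); last lia.
    by rewrite (drop_nth 0 (_ : j.+1 < size v)) ?H3 ?H4 // -Hs.
  have Pp : pell_word k (take j u).
    apply: (@pell_prefix k _ (k - 1) ((k - 1) :: drop (j + 2) u)); first by apply/eqP; lia.
    by rewrite -Eu.
  rewrite Eu Ev !enc_cat //= eqxx (_ : (k - 1 == k) = false); last by apply/eqP; lia.
  rewrite hd_cat // catA hd_cat ?size_cat ?size_mkseq; last lia.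
  by rewrite hd_refl hd_refl hd_kk.
Qed.

Lemma card_count N (P : nat -> bool) : #|[pred i : 'I_N | P i]| = count P (iota 0 N).
Proof.
rewrite cardE /enum_mem size_filter -val_enum_ord count_map enumT.
by apply: eq_count.
Qed.

Lemma hd_sym x y : hd x y = hd y x.
Proof.
elim: x y => [|a x IH] [|b y] //=. rewrite /hd /= -/(hd x y) -/(hd y x) IH.
by rewrite eq_sym.
Qed.

Lemma take_last N (x : seq bool) : size x = N.+1 -> last false x = false ->
  x = take N x ++ [:: false].
Proof.
move=> Hs Hl. have E := cat_take_drop N x.
have : size (drop N x) = 1 by rewrite size_drop Hs subSnn.
case Ed: (drop N x) => [|c [|]] // _.
have Hc : c = false by move: Hl; rewrite -{1}E Ed last_cat.
by rewrite -{1}E Ed Hc.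
Qed.

Lemma nth_take_gen N (x : seq bool) i : nth false (take N x) i = (i < N) && nth false x i.
Proof.
case: (ltnP i N) => H; first by rewrite nth_take.
by rewrite nth_default // size_take_min; lia.
Qed.

Lemma fibv N x : size x = N.+1 -> nocons x -> fib_vertex N (take N x).
Proof.
move=> Hs Hn; apply/andP; split.
  by rewrite size_take_min; apply/eqP; lia.
apply/forallP => i; rewrite !nth_take_gen.
apply: contra (noconsP Hn i) => /andP [/andP [_ ->] /andP [_ ->]]. by [].
Qed.

Theorem proposition5p8 (n k : nat) : 1 <= n -> 2 <= k ->
  exists f : seq nat -> seq bool,
    [/\ (forall u, pell_vertex n k u -> fib_vertex ((2 * k - 2) * n - 1) (f u)),
        {in pell_vertex n k &, injective f}
      & (forall u v, pell_adj n k u v -> fib_adj ((2 * k - 2) * n - 1) (f u) (f v))].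
Proof.
move=> hn hk. set N := (2 * k - 2) * n - 1.
have encS : forall u, pell_vertex n k u -> size (enc k u) = N.+1.
  move=> u /andP [/eqP Su Pu]; rewrite (enc_size Pu) Su /N; nia.
have encO : forall u, pell_vertex n k u -> nocons (enc k u) /\ last false (enc k u) = false.
  move=> u /andP [_ Pu]; exact: enc_ok.
have fv : forall u, pell_vertex n k u -> fib_vertex N (take N (enc k u)).
  move=> u Hu; apply: fibv; [exact: encS | by case: (encO u Hu)].
exists (fun u => take N (enc k u)); split => //.
- move=> u v Hu Hv /= E.
  have Eu := take_last (encS u Hu) (proj2 (encO u Hu)).
  have Ev := take_last (encS v Hv) (proj2 (encO v Hv)).
  move: (Hu) (Hv) => /andP [_ Pu] /andP [_ Pv].
  apply: (@enc_inj k hk (size u).+1 u v (ltnSn _) Pu Pv).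
  by rewrite Eu Ev E.
- move=> u v [Hu [Hv Hup]]; split; first exact: fv.
  split; first exact: fv.
  have H1 : hd (enc k u) (enc k v) = 1.
    case: Hup => Hup; first exact: (adj_up hk Hu Hv Hup).
    by rewrite hd_sym; exact: (adj_up hk Hv Hu Hup).
  have Eu := take_last (encS u Hu) (proj2 (encO u Hu)).
  have Ev := take_last (encS v Hv) (proj2 (encO v Hv)).
  have Stu : size (take N (enc k u)) = N by rewrite size_take_min encS //; lia.
  have Stv : size (take N (enc k v)) = N by rewrite size_take_min encS //; lia.
  rewrite Eu Ev hd_cat ?Stu ?Stv // hd_refl addn0 hd_nth ?Stu ?Stv // in H1.
  by rewrite -H1; apply: (card_count N (fun i => nth false (take N (enc k u)) i != nth false (take N (enc k v)) i)).
Qed.
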